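(* Let $I=[0,1]$ with the metric $\mathrm{d}(x,y)=|x-y|$ and let $\mathrm{Diff}^1(I)$ be the group of $C^1$ diffeomorphisms of $I$. On $\mathrm{Diff}^1(I)$ the metric $\mathrm{d}_W$ defines the $C^1$ topology, i.e. the topology of the metric $\mathrm{d}_{C^0}(f,g)+\mathrm{d}_{C^0}(f',g')$.
   Context: $\mathrm{d}_{C^0}(f,g)=\max_{x}|f(x)-g(x)|+\max_x|f^{-1}(x)-g^{-1}(x)|$ (for the derivatives, $\mathrm{d}_{C^0}(f',g')$ is understood as the uniform distance $\max_x|f'(x)-g'(x)|$). $\mathrm{d}'_W(f,g)=\sup_{x\ne y}\frac{||f(x)-f(y)|-|g(x)-g(y)||}{|x-y|}$ and $\mathrm{d}_W(f,g)=\mathrm{d}_{C^0}(f,g)+\mathrm{d}'_W(f,g)+\mathrm{d}'_W(f^{-1},g^{-1})$. *)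

(* Defs.v *)
From Stdlib Require Import Reals Lra ClassicalEpsilon.
Open Scope R_scope.

Definition inI (x : R) : Prop := 0 <= x <= 1.

(* Supremum of a set of reals (classical choice of a least upper bound;
   for the sets used below it always exists). *)
Definition Rsup (E : R -> Prop) : R :=
  epsilon (inhabits 0) (fun s => is_lub E s).

(* f has derivative l at x relative to I (one-sided at the endpoints). *)
Definition derivI (f : R -> R) (x l : R) : Prop :=
  limit1_in (fun y => (f y - f x) / (y - x)) (fun y => inI y /\ y <> x) l x.

Definition contI (h : R -> R) (x : R) : Prop :=
  limit1_in h inI (h x) x.

Definition C1I (f df : R -> R) : Prop :=
  (forall x, inI x -> derivI f x (df x)) /\ (forall x, inI x -> contI df x).

(* An element of Diff^1(I): a bijection f of I with inverse finv, both C^1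
   on I, together with their derivatives (unique on I). *)
Record Diff1 : Type := mkDiff1 {
  dfun : R -> R;
  dinv : R -> R;
  dder : R -> R;
  dinvder : R -> R;
  d_maps : forall x, inI x -> inI (dfun x);
  d_inv_maps : forall y, inI y -> inI (dinv y);
  d_inv_l : forall x, inI x -> dinv (dfun x) = x;
  d_inv_r : forall y, inI y -> dfun (dinv y) = y;
  d_C1 : C1I dfun dder;
  d_inv_C1 : C1I dinv dinvder
}.

Definition unif (f g : R -> R) : R :=
  Rsup (fun r => exists x, inI x /\ r = Rabs (f x - g x)).

Definition dC0 (f g : Diff1) : R :=
  unif (dfun f) (dfun g) + unif (dinv f) (dinv g).

Definition dW' (f g : R -> R) : R :=
  Rsup (fun r => exists x y, inI x /\ inI y /\ x <> y /\
          r = Rabs (Rabs (f x - f y) - Rabs (g x - g y)) / Rabs (x - y)).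

Definition dW (f g : Diff1) : R :=
  dC0 f g + dW' (dfun f) (dfun g) + dW' (dinv f) (dinv g).

Definition dC1 (f g : Diff1) : R :=
  dC0 f g + unif (dder f) (dder g).

(* Main.v *)
Require Import Defs.
From Stdlib Require Import Reals Lra ClassicalEpsilon.
Open Scope R_scope.

Definition clamp x := Rmin 1 (Rmax 0 x).

Lemma clamp_I x : inI (clamp x).
Proof. unfold clamp, inI, Rmin, Rmax; repeat destruct Rle_dec; lra. Qed.

Lemma clamp_id x : inI x -> clamp x = x.
Proof. unfold clamp, inI, Rmin, Rmax; intros; repeat destruct Rle_dec; lra. Qed.

Lemma clamp_lip x y : Rabs (clamp x - clamp y) <= Rabs (x - y).
Proof.
  unfold clamp, Rmin, Rmax; repeat destruct Rle_dec; unfold Rabs;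
  repeat destruct Rcase_abs; lra.
Qed.

Lemma cont_pt_of (F : R -> R) x :
  (forall e, e > 0 -> exists d, d > 0 /\ forall y, Rabs (y - x) < d -> Rabs (F y - F x) < e) ->
  continuity_pt F x.
Proof.
  intros H. unfold continuity_pt, continue_in, limit1_in, limit_in. simpl. unfold R_dist.
  intros e He. destruct (H e He) as [d [Hd H']]. exists d; split; auto.
  intros y [_ Hy]. apply H'; exact Hy.
Qed.

Lemma contI_clamp h : (forall x, inI x -> contI h x) ->
  forall x, continuity_pt (fun y => h (clamp y)) x.
Proof.
  intros H x. apply cont_pt_of. intros e He.
  pose proof (H (clamp x) (clamp_I x)) as Hc.
  unfold contI, limit1_in, limit_in in Hc. simpl in Hc. unfold R_dist in Hc.
  destruct (Hc e He) as [d [Hd H']]. exists d; split; auto.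
  intros y Hy. apply H'. split. apply clamp_I.
  eapply Rle_lt_trans. apply clamp_lip. exact Hy.
Qed.

Lemma derivI_cont f x l : inI x -> derivI f x l -> contI f x.
Proof.
  intros Hx H. unfold derivI, contI, limit1_in, limit_in in *. simpl in *. unfold R_dist in *.
  intros e He. destruct (H 1 Rlt_0_1) as [d1 [Hd1 H1]].
  assert (Hl : 0 < Rabs l + 1) by (pose proof (Rabs_pos l); lra).
  exists (Rmin d1 (e / (Rabs l + 1))). split.
  { apply Rmin_glb_lt; auto. apply Rdiv_lt_0_compat; lra. }
  intros y [Hy Hyd].
  destruct (Req_dec y x) as [->|Hne]. { rewrite Rminus_diag, Rabs_R0; lra. }
  assert (Hq := H1 y (conj (conj Hy Hne) (Rlt_le_trans _ _ _ Hyd (Rmin_l _ _)))).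
  assert (Hyd2 : Rabs (y - x) < e / (Rabs l + 1)) by (eapply Rlt_le_trans; [exact Hyd| apply Rmin_r]).
  set (q := (f y - f x) / (y - x)) in *.
  assert (Hyx : y - x <> 0) by lra.
  replace (f y - f x) with (q * (y - x)) by (unfold q; field; auto).
  rewrite Rabs_mult.
  assert (Hq2 : Rabs q <= Rabs l + 1).
  { pose proof (Rabs_triang_inv q l). lra. }
  apply Rle_lt_trans with ((Rabs l + 1) * Rabs (y - x)).
  { apply Rmult_le_compat_r; [apply Rabs_pos|auto]. }
  replace e with ((Rabs l + 1) * (e / (Rabs l + 1))) by (field; lra).
  apply Rmult_lt_compat_l; lra.
Qed.

Lemma derivI_interior f x l : 0 < x < 1 -> derivI f x l ->
  derivable_pt_lim (fun y => f (clamp y)) x l.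
Proof.
  intros Hx H. unfold derivI, limit1_in, limit_in in H. simpl in H. unfold R_dist in H.
  intros e He. destruct (H e He) as [d [Hd H']].
  assert (Hp : 0 < Rmin d (Rmin x (1 - x))) by (repeat apply Rmin_glb_lt; lra).
  exists (mkposreal _ Hp). simpl. intros h Hh0 Hh.
  assert (Hm1 := Rmin_l d (Rmin x (1 - x))). assert (Hm2 := Rmin_r d (Rmin x (1 - x))).
  assert (Hm3 := Rmin_l x (1 - x)). assert (Hm4 := Rmin_r x (1 - x)).
  assert (Hha : - Rmin d (Rmin x (1 - x)) < h < Rmin d (Rmin x (1 - x))).
  { unfold Rabs in Hh; destruct Rcase_abs in Hh; lra. }
  rewrite !clamp_id by (unfold inI; lra).
  specialize (H' (x + h)). replace (x + h - x) with h in H' by ring.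
  apply H'. split; [split|].
  - unfold inI; lra.
  - lra.
  - lra.
Qed.
Lemma mvt_I h dh a b : (forall x, inI x -> derivI h x (dh x)) -> inI a -> inI b -> a < b ->
  exists c, a < c < b /\ h b - h a = dh c * (b - a).
Proof.
  intros Hd Ha Hb Hab.
  set (H := fun y => h (clamp y)).
  assert (pr1 : forall c, a < c < b -> derivable_pt H c).
  { intros c Hc. exists (dh c). apply derivI_interior.
    unfold inI in *; lra. apply Hd. unfold inI in *; lra. }
  assert (pr2 : forall c, a < c < b -> derivable_pt id c).
  { intros c _. apply derivable_pt_id. }
  assert (Hc1 : forall c, a <= c <= b -> continuity_pt H c).
  { intros c _. apply contI_clamp. intros x Hx. eapply derivI_cont; eauto. }
  assert (Hc2 : forall c, a <= c <= b -> continuity_pt id c).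
  { intros c _. apply derivable_continuous_pt. apply derivable_pt_id. }
  destruct (MVT H id a b pr1 pr2 Hab Hc1 Hc2) as [c [P HP]].
  exists c; split; auto.
  rewrite (derive_pt_eq_0 H c (dh c) (pr1 c P)) in HP.
  2:{ apply derivI_interior. unfold inI in *; lra. apply Hd. unfold inI in *; lra. }
  rewrite (derive_pt_eq_0 id c 1 (pr2 c P) (derivable_pt_lim_id c)) in HP. unfold H, id in HP.
  rewrite !clamp_id in HP by auto. lra.
Qed.

Lemma derivI_minus f g x a b : derivI f x a -> derivI g x b ->
  derivI (fun y => f y - g y) x (a - b).
Proof.
  unfold derivI, limit1_in, limit_in; simpl; unfold R_dist.
  intros Hf Hg e He.
  destruct (Hf (e/2)) as [d1 [Hd1 H1]]. lra.
  destruct (Hg (e/2)) as [d2 [Hd2 H2]]. lra.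
  exists (Rmin d1 d2). split. apply Rmin_glb_lt; auto.
  intros y [Hy Hyd].
  specialize (H1 y (conj Hy (Rlt_le_trans _ _ _ Hyd (Rmin_l _ _)))).
  specialize (H2 y (conj Hy (Rlt_le_trans _ _ _ Hyd (Rmin_r _ _)))).
  replace ((f y - g y - (f x - g x)) / (y - x) - (a - b)) with
    (((f y - f x) / (y - x) - a) - ((g y - g x) / (y - x) - b)) by (unfold Rdiv; ring).
  eapply Rle_lt_trans. apply Rabs_triang. rewrite Rabs_Ropp. lra.
Qed.

Lemma mvt_bound h dh K : (forall x, inI x -> derivI h x (dh x)) ->
  (forall x, inI x -> Rabs (dh x) <= K) ->
  forall x y, inI x -> inI y -> Rabs (h x - h y) <= K * Rabs (x - y).
Proof.
  intros Hd HK.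
  assert (HK0 : 0 <= K). { eapply Rle_trans. apply Rabs_pos. apply (HK 0). unfold inI; lra. }
  assert (Hgen : forall x y, inI x -> inI y -> x < y -> Rabs (h x - h y) <= K * Rabs (x - y)).
  { intros x y Hx Hy Hxy. destruct (mvt_I h dh x y Hd Hx Hy Hxy) as [c [Hc Heq]].
    rewrite Rabs_minus_sym, Heq, (Rabs_minus_sym x y), Rabs_mult.
    apply Rmult_le_compat_r. apply Rabs_pos. apply HK. unfold inI in *; lra. }
  intros x y Hx Hy. destruct (Rtotal_order x y) as [Hl|[He|Hg]].
  - auto.
  - subst. rewrite !Rminus_diag, Rabs_R0. lra.
  - rewrite Rabs_minus_sym, (Rabs_minus_sym x y). auto.
Qed.

Lemma near_pt x : inI x -> forall d, d > 0 -> exists z, inI z /\ z <> x /\ Rabs (z - x) < d.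
Proof.
  intros Hx d Hd. set (t := Rmin (d/2) (1/2)).
  assert (Ht1 : t <= d/2) by apply Rmin_l. assert (Ht2 : t <= 1/2) by apply Rmin_r.
  assert (Ht0 : 0 < t) by (apply Rmin_glb_lt; lra).
  unfold inI in *.
  destruct (Rle_dec x (1/2)).
  - exists (x + t). repeat split; try lra. replace (x + t - x) with t by ring.
    rewrite Rabs_right; lra.
  - exists (x - t). repeat split; try lra. replace (x - t - x) with (- t) by ring.
    rewrite Rabs_Ropp, Rabs_right; lra.
Qed.

Lemma Rsup_spec E : (exists B, forall r, E r -> r <= B) -> (exists r, E r) -> is_lub E (Rsup E).
Proof.
  intros [B HB] Hne. unfold Rsup. apply epsilon_spec.
  destruct (completeness E) as [m Hm]. exists B; exact HB. exact Hne. exists m; exact Hm.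
Qed.

Lemma Rsup_ge E r : (exists B, forall r, E r -> r <= B) -> E r -> r <= Rsup E.
Proof. intros HB Hr. destruct (Rsup_spec E HB (ex_intro _ r Hr)) as [H _]. apply H, Hr. Qed.

Lemma Rsup_le E B : (forall r, E r -> r <= B) -> (exists r, E r) -> Rsup E <= B.
Proof. intros HB Hne. destruct (Rsup_spec E (ex_intro _ B HB) Hne) as [_ H]. apply H. exact HB. Qed.
Definition flip (h : Diff1) : Diff1 :=
  mkDiff1 (dinv h) (dfun h) (dinvder h) (dder h) (d_inv_maps h) (d_maps h)
    (d_inv_r h) (d_inv_l h) (d_inv_C1 h) (d_C1 h).

Lemma deriv_bound f df : C1I f df -> exists M, 0 < M /\ forall x, inI x -> Rabs (df x) <= M.
Proof.
  intros [_ Hc].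
  destruct (continuity_ab_maj (fun y => Rabs (df (clamp y))) 0 1) as [Mx [HM _]]. lra.
  { intros c _. apply cont_pt_of. intros e He.
    pose proof (contI_clamp df Hc c) as Hcc.
    unfold continuity_pt, continue_in, limit1_in, limit_in in Hcc. simpl in Hcc. unfold R_dist in Hcc.
    destruct (Hcc e He) as [d [Hd H']]. exists d; split; auto. intros y Hy.
    destruct (Req_dec y c) as [->|Hne]. rewrite Rminus_diag, Rabs_R0; lra.
    eapply Rle_lt_trans. apply Rabs_triang_inv2. apply H'. split; [split; [exact I| auto]| exact Hy]. }
  exists (Rabs (df (clamp Mx)) + 1). split. pose proof (Rabs_pos (df (clamp Mx))); lra.
  intros x Hx. specialize (HM x Hx). rewrite clamp_id in HM by auto. lra.
Qed.

Lemma lip f df : C1I f df -> exists M, 0 < M /\ forall x y, inI x -> inI y ->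
  Rabs (f x - f y) <= M * Rabs (x - y).
Proof.
  intros H. destruct (deriv_bound f df H) as [M [HM0 HM]]. exists M; split; auto.
  apply mvt_bound with df; auto. apply H.
Qed.

Lemma unif_cont f df : C1I f df -> forall e, e > 0 -> exists w, w > 0 /\
  forall x y, inI x -> inI y -> Rabs (x - y) < w -> Rabs (df x - df y) < e.
Proof.
  intros [_ Hc] e He.
  destruct (Heine (fun y => df (clamp y)) (fun c => 0 <= c <= 1) (compact_P3 0 1)
    (fun x _ => contI_clamp df Hc x) (mkposreal e He)) as [w Hw].
  exists w. split. apply cond_pos. intros x y Hx Hy Hxy.
  specialize (Hw x y Hx Hy Hxy). simpl in Hw. rewrite !clamp_id in Hw by auto. exact Hw.
Qed.

Lemma small_zero u C : 0 <= C -> (forall e, 0 < e < 1 -> Rabs u <= e * C) -> u = 0.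
Proof.
  intros HC H. destruct (Req_dec u 0) as [|Hu]; auto. exfalso.
  assert (Hp : 0 < Rabs u) by (apply Rabs_pos_lt; auto).
  set (e := Rmin (1/2) (Rabs u / (2 * (C + 1)))).
  assert (He1 : e <= 1/2) by apply Rmin_l.
  assert (He2 : e <= Rabs u / (2 * (C + 1))) by apply Rmin_r.
  assert (He0 : 0 < e) by (apply Rmin_glb_lt; [lra| apply Rdiv_lt_0_compat; lra]).
  specialize (H e ltac:(lra)).
  assert (e * (2 * (C + 1)) <= Rabs u).
  { apply Rmult_le_reg_r with (/ (2 * (C + 1))). apply Rinv_0_lt_compat; lra.
    rewrite Rmult_assoc, Rinv_r by lra. lra. }
  nra.
Qed.

Lemma chain (h : Diff1) x : inI x -> dder h x * dinvder h (dfun h x) = 1.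
Proof.
  intros Hx.
  set (f := dfun h). set (g := dinv h). set (a := dder h x). set (b := dinvder h (f x)).
  assert (Hdf : derivI f x a) by (apply (proj1 (d_C1 h)); auto).
  assert (Hfx : inI (f x)) by (apply d_maps; auto).
  assert (Hdg : derivI g (f x) b) by (apply (proj1 (d_inv_C1 h)); auto).
  assert (Hcf : contI f x) by (eapply derivI_cont; eauto).
  assert (Hgf : forall z, inI z -> g (f z) = z) by (intros; apply d_inv_l; auto).
  cut (a * b - 1 = 0). lra.
  apply small_zero with (Rabs a + Rabs b + 1).
  { pose proof (Rabs_pos a); pose proof (Rabs_pos b); lra. }
  intros e He.
  unfold derivI, contI, limit1_in, limit_in in Hdf, Hdg, Hcf. simpl in *. unfold R_dist in *.
  destruct (Hdf e ltac:(lra)) as [d1 [Hd1 H1]].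
  destruct (Hdg e ltac:(lra)) as [d2 [Hd2 H2]].
  destruct (Hcf d2 Hd2) as [d3 [Hd3 H3]].
  destruct (near_pt x Hx (Rmin d1 d3) ltac:(apply Rmin_glb_lt; auto)) as [z [Hz [Hzx Hzd]]].
  assert (Hz1 := H1 z (conj (conj Hz Hzx) (Rlt_le_trans _ _ _ Hzd (Rmin_l _ _)))).
  assert (Hz3 := H3 z (conj Hz (Rlt_le_trans _ _ _ Hzd (Rmin_r _ _)))).
  assert (Hfz : inI (f z)) by (apply d_maps; auto).
  assert (Hne : f z <> f x).
  { intro E. apply Hzx. rewrite <- (Hgf z Hz), <- (Hgf x Hx). f_equal. auto. }
  assert (Hz2 := H2 (f z) (conj (conj Hfz Hne) Hz3)).
  rewrite (Hgf z Hz), (Hgf x Hx) in Hz2.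
  set (q1 := (f z - f x) / (z - x)) in *.
  set (q2 := (z - x) / (f z - f x)) in *.
  assert (Hq : q1 * q2 = 1).
  { unfold q1, q2. field. split; intro; [apply Hne|apply Hzx]; lra. }
  replace (a * b - 1) with (a * (b - q2) + q2 * (a - q1)) by (rewrite <- Hq; ring).
  eapply Rle_trans. apply Rabs_triang. rewrite !Rabs_mult.
  assert (Hb2 : Rabs q2 <= Rabs b + e).
  { pose proof (Rabs_triang_inv q2 b). lra. }
  rewrite (Rabs_minus_sym b q2), (Rabs_minus_sym a q1).
  pose proof (Rabs_pos a); pose proof (Rabs_pos b); pose proof (Rabs_pos q2).
  pose proof (Rabs_pos (q2 - b)); pose proof (Rabs_pos (q1 - a)).
  nra.
Qed.
Lemma sign_const d : (forall x, inI x -> contI d x) -> (forall x, inI x -> d x <> 0) ->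
  d 0 < 0 -> forall x, inI x -> d x < 0.
Proof.
  intros Hc Hn H0 x Hx. destruct (Rlt_dec (d x) 0) as [|Hnl]; auto. exfalso.
  assert (Hpos : 0 < d x) by (specialize (Hn x Hx); lra).
  assert (Hx0 : 0 < x).
  { destruct (Req_dec x 0) as [->|]; [lra|unfold inI in Hx; lra]. }
  assert (Hcont : continuity (fun y => d (clamp y))) by (intro; apply contI_clamp; auto).
  destruct (IVT (fun y => d (clamp y)) 0 x Hcont Hx0) as [z [Hz Hdz]].
  { rewrite clamp_id; auto. unfold inI; lra. }
  { rewrite clamp_id; auto. }
  apply (Hn (clamp z) (clamp_I z)). exact Hdz.
Qed.

Lemma contI_opp d x : contI d x -> contI (fun y => - d y) x.
Proof.
  unfold contI, limit1_in, limit_in; simpl; unfold R_dist. intros H e He.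
  destruct (H e He) as [a [Ha H']]. exists a; split; auto. intros y Hy.
  replace (- d y - - d x) with (- (d y - d x)) by ring. rewrite Rabs_Ropp. auto.
Qed.

Lemma orient (h : Diff1) :
  ((forall x, inI x -> 0 < dder h x) /\ dfun h 0 = 0) \/
  ((forall x, inI x -> dder h x < 0) /\ dfun h 0 = 1).
Proof.
  assert (Hn : forall x, inI x -> dder h x <> 0).
  { intros x Hx E. pose proof (chain h x Hx) as C. rewrite E in C. lra. }
  assert (Hc : forall x, inI x -> contI (dder h) x) by apply (proj2 (d_C1 h)).
  assert (I0 : inI 0) by (unfold inI; lra).
  assert (I1 : inI 1) by (unfold inI; lra).
  pose proof (d_maps h 0 I0) as F0.
  destruct (Rlt_dec (dder h 0) 0) as [Hneg|Hnn].
  - right. assert (Hall := sign_const (dder h) Hc Hn Hneg). split; auto.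
    pose proof (d_inv_maps h 1 I1) as Hz. pose proof (d_inv_r h 1 I1) as Hr.
    destruct (Req_dec (dinv h 1) 0) as [E|Ne].
    + rewrite E in Hr; auto.
    + exfalso. destruct (mvt_I (dfun h) (dder h) 0 (dinv h 1) (proj1 (d_C1 h)) I0 Hz)
        as [c [Hc' Heq]]. unfold inI in Hz; lra.
      assert (dder h c < 0) by (apply Hall; unfold inI in *; lra).
      rewrite Hr in Heq. unfold inI in *. nra.
  - left. assert (Hpos0 : 0 < dder h 0) by (specialize (Hn 0 I0); lra).
    assert (Hall : forall x, inI x -> 0 < dder h x).
    { intros x Hx. cut (- dder h x < 0). lra.
      apply (sign_const (fun y => - dder h y)); auto.
      intros; apply contI_opp; auto. intros y Hy. specialize (Hn y Hy). lra. lra. }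
    split; auto.
    pose proof (d_inv_maps h 0 I0) as Hz. pose proof (d_inv_r h 0 I0) as Hr.
    destruct (Req_dec (dinv h 0) 0) as [E|Ne].
    + rewrite E in Hr; auto.
    + exfalso. destruct (mvt_I (dfun h) (dder h) 0 (dinv h 0) (proj1 (d_C1 h)) I0 Hz)
        as [c [Hc' Heq]]. unfold inI in Hz; lra.
      assert (0 < dder h c) by (apply Hall; unfold inI in *; lra).
      rewrite Hr in Heq. unfold inI in *. nra.
Qed.
Definition Qw (f g : R -> R) x y :=
  Rabs (Rabs (f x - f y) - Rabs (g x - g y)) / Rabs (x - y).

Lemma I0 : inI 0. Proof. unfold inI; lra. Qed.
Lemma I1 : inI 1. Proof. unfold inI; lra. Qed.

Lemma unif_pt f g B x : (forall x, inI x -> Rabs (f x - g x) <= B) -> inI x ->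
  Rabs (f x - g x) <= unif f g.
Proof.
  intros HB Hx. unfold unif. apply Rsup_ge.
  exists B. intros r [y [Hy ->]]. auto. exists x; auto.
Qed.

Lemma unif_le f g B : (forall x, inI x -> Rabs (f x - g x) <= B) -> unif f g <= B.
Proof.
  intros HB. unfold unif. apply Rsup_le.
  intros r [y [Hy ->]]. auto. exists (Rabs (f 0 - g 0)), 0. split; auto. apply I0.
Qed.

Lemma unif_ge0 f g B : (forall x, inI x -> Rabs (f x - g x) <= B) -> 0 <= unif f g.
Proof. intros HB. eapply Rle_trans. apply Rabs_pos. apply (unif_pt f g B 0 HB I0). Qed.

Lemma bound1 a b : inI a -> inI b -> Rabs (a - b) <= 1.
Proof. unfold inI; intros; unfold Rabs; destruct Rcase_abs; lra. Qed.

Lemma dW'_pt f g B x y : (forall x y, inI x -> inI y -> x <> y -> Qw f g x y <= B) ->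
  inI x -> inI y -> x <> y -> Qw f g x y <= dW' f g.
Proof.
  intros HB Hx Hy Hxy. unfold dW'. apply Rsup_ge.
  exists B. intros r [u [v [Hu [Hv [Huv ->]]]]]. apply HB; auto.
  exists x, y; auto.
Qed.

Lemma dW'_le f g B : (forall x y, inI x -> inI y -> x <> y -> Qw f g x y <= B) -> dW' f g <= B.
Proof.
  intros HB. unfold dW'. apply Rsup_le.
  intros r [u [v [Hu [Hv [Huv ->]]]]]. apply HB; auto.
  exists (Qw f g 0 1), 0, 1. repeat split; try apply I0; try apply I1. intro; lra.
Qed.

Lemma Qw_ge0 f g x y : 0 <= Qw f g x y.
Proof.
  unfold Qw, Rdiv. apply Rmult_le_pos. apply Rabs_pos.
  destruct (Req_dec (x - y) 0) as [E|E]. rewrite E, Rabs_R0, Rinv_0; lra.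
  left. apply Rinv_0_lt_compat, Rabs_pos_lt; auto.
Qed.

Lemma dW'_ge0 f g B : (forall x y, inI x -> inI y -> x <> y -> Qw f g x y <= B) -> 0 <= dW' f g.
Proof.
  intros HB. eapply Rle_trans. apply (Qw_ge0 f g 0 1).
  apply (dW'_pt f g B); [exact HB|apply I0|apply I1|intro; lra].
Qed.

Lemma div_le u c B : 0 < c -> u <= B * c -> u / c <= B.
Proof.
  intros Hc H. apply Rmult_le_reg_r with c; auto. unfold Rdiv.
  rewrite Rmult_assoc, Rinv_l by lra. lra.
Qed.

Lemma Qw_lip f g Mf Mg :
  (forall x y, inI x -> inI y -> Rabs (f x - f y) <= Mf * Rabs (x - y)) ->
  (forall x y, inI x -> inI y -> Rabs (g x - g y) <= Mg * Rabs (x - y)) ->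
  forall x y, inI x -> inI y -> x <> y -> Qw f g x y <= Mf + Mg.
Proof.
  intros Hf Hg x y Hx Hy Hxy. unfold Qw. apply div_le.
  apply Rabs_pos_lt; lra.
  specialize (Hf x y Hx Hy). specialize (Hg x y Hx Hy).
  eapply Rle_trans. apply Rabs_triang. rewrite Rabs_Ropp, !Rabs_Rabsolu, Rmult_plus_distr_r. lra.
Qed.

Lemma Qw_mvt f g K :
  (forall x y, inI x -> inI y -> Rabs ((f x - g x) - (f y - g y)) <= K * Rabs (x - y)) ->
  forall x y, inI x -> inI y -> x <> y -> Qw f g x y <= K.
Proof.
  intros H x y Hx Hy Hxy. unfold Qw. apply div_le.
  apply Rabs_pos_lt; lra.
  eapply Rle_trans. apply Rabs_triang_inv2.
  replace (f x - f y - (g x - g y)) with ((f x - g x) - (f y - g y)) by ring. auto.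
Qed.
Lemma Rabs_div' a b : b <> 0 -> Rabs (a / b) = Rabs a / Rabs b.
Proof. intros. unfold Rdiv. rewrite Rabs_mult, Rabs_inv. reflexivity. Qed.
Lemma tri3 A B C Dd : Rabs (A - B) <= Rabs (A - C) + Rabs (C - Dd) + Rabs (Dd - B).
Proof.
  replace (A - B) with ((A - C) + (C - Dd) + (Dd - B)) by ring.
  eapply Rle_trans. apply Rabs_triang. pose proof (Rabs_triang (A - C) (C - Dd)). lra.
Qed.

Lemma deriv_diff_le f g x a b D : inI x -> derivI f x a -> derivI g x b ->
  (forall y, inI y -> y <> x -> Qw f g x y <= D) -> Rabs (Rabs a - Rabs b) <= D.
Proof.
  intros Hx Hf Hg HD.
  destruct (Rle_dec (Rabs (Rabs a - Rabs b)) D) as [|Hn]; auto. exfalso.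
  set (u := Rabs (Rabs a - Rabs b)) in *.
  set (e := (u - D) / 4).
  assert (He : e > 0) by (unfold e; lra).
  unfold derivI, limit1_in, limit_in in Hf, Hg. simpl in *. unfold R_dist in *.
  destruct (Hf e He) as [d1 [Hd1 H1]].
  destruct (Hg e He) as [d2 [Hd2 H2]].
  destruct (near_pt x Hx (Rmin d1 d2) ltac:(apply Rmin_glb_lt; auto)) as [z [Hz [Hzx Hzd]]].
  assert (Hz1 := H1 z (conj (conj Hz Hzx) (Rlt_le_trans _ _ _ Hzd (Rmin_l _ _)))).
  assert (Hz2 := H2 z (conj (conj Hz Hzx) (Rlt_le_trans _ _ _ Hzd (Rmin_r _ _)))).
  set (q1 := (f z - f x) / (z - x)) in *.
  set (q2 := (g z - g x) / (g z - g x)) in *. clear q2.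
  set (q2 := (g z - g x) / (z - x)) in *.
  assert (Hc : 0 < Rabs (x - z)) by (apply Rabs_pos_lt; lra).
  assert (E1 : Rabs q1 = Rabs (f x - f z) / Rabs (x - z)).
  { unfold q1. rewrite Rabs_div' by lra. rewrite (Rabs_minus_sym (f z)), (Rabs_minus_sym z). reflexivity. }
  assert (E2 : Rabs q2 = Rabs (g x - g z) / Rabs (x - z)).
  { unfold q2. rewrite Rabs_div' by lra. rewrite (Rabs_minus_sym (g z)), (Rabs_minus_sym z). reflexivity. }
  assert (E3 : Rabs (Rabs q1 - Rabs q2) = Qw f g x z).
  { rewrite E1, E2. unfold Qw.
    replace (Rabs (f x - f z) / Rabs (x - z) - Rabs (g x - g z) / Rabs (x - z)) with
      ((Rabs (f x - f z) - Rabs (g x - g z)) / Rabs (x - z)) by (unfold Rdiv; ring).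
    rewrite Rabs_div' by lra. rewrite Rabs_Rabsolu. reflexivity. }
  assert (HQ := HD z Hz Hzx). rewrite <- E3 in HQ.
  pose proof (tri3 (Rabs a) (Rabs b) (Rabs q1) (Rabs q2)) as T.
  pose proof (Rabs_triang_inv2 a q1) as T1. pose proof (Rabs_triang_inv2 q2 b) as T2.
  rewrite (Rabs_minus_sym a q1) in T1.
  fold u in T. unfold e in *. lra.
Qed.
Lemma dir1 (f : Diff1) eps : eps > 0 -> exists delta, delta > 0 /\
  forall g : Diff1, dW f g < delta -> dC1 f g < eps.
Proof.
  intros He. exists (Rmin 1 eps). split. apply Rmin_glb_lt; lra.
  intros g Hg.
  assert (Hm1 := Rmin_l 1 eps). assert (Hm2 := Rmin_r 1 eps).
  destruct (lip _ _ (d_C1 f)) as [Mf [_ Lf]].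
  destruct (lip _ _ (d_C1 g)) as [Mg [_ Lg]].
  destruct (lip _ _ (d_inv_C1 f)) as [Nf [_ Kf]].
  destruct (lip _ _ (d_inv_C1 g)) as [Ng [_ Kg]].
  assert (HB1 : forall x, inI x -> Rabs (dfun f x - dfun g x) <= 1).
  { intros; apply bound1; apply d_maps; auto. }
  assert (HB2 : forall x, inI x -> Rabs (dinv f x - dinv g x) <= 1).
  { intros; apply bound1; apply d_inv_maps; auto. }
  assert (HW1 := Qw_lip _ _ _ _ Lf Lg).
  assert (HW2 := Qw_lip _ _ _ _ Kf Kg).
  assert (A1 := unif_ge0 _ _ _ HB1). assert (A2 := unif_ge0 _ _ _ HB2).
  assert (A3 := dW'_ge0 _ _ _ HW1). assert (A4 := dW'_ge0 _ _ _ HW2).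
  unfold dW, dC0 in Hg.
  assert (P0 := unif_pt _ _ _ 0 HB1 I0).
  assert (Hor : (forall x, inI x -> 0 < dder f x /\ 0 < dder g x) \/
                (forall x, inI x -> dder f x < 0 /\ dder g x < 0)).
  { destruct (orient f) as [[Pf Ef]|[Pf Ef]]; destruct (orient g) as [[Pg Eg]|[Pg Eg]].
    - left; auto.
    - exfalso. rewrite Ef, Eg in P0. rewrite Rabs_left in P0 by lra. lra.
    - exfalso. rewrite Ef, Eg in P0. rewrite Rabs_right in P0 by lra. lra.
    - right; auto. }
  assert (U : unif (dder f) (dder g) <= dW' (dfun f) (dfun g)).
  { apply unif_le. intros x Hx.
    assert (Hd := deriv_diff_le (dfun f) (dfun g) x (dder f x) (dder g x)
      (dW' (dfun f) (dfun g)) Hx (proj1 (d_C1 f) x Hx) (proj1 (d_C1 g) x Hx)).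
    assert (Hd' : Rabs (Rabs (dder f x) - Rabs (dder g x)) <= dW' (dfun f) (dfun g)).
    { apply Hd. intros y Hy Hyx. apply (dW'_pt _ _ (Mf + Mg)); auto. }
    destruct Hor as [Hp|Hp]; destruct (Hp x Hx) as [Pa Pb].
    - rewrite (Rabs_right (dder f x)), (Rabs_right (dder g x)) in Hd' by lra. exact Hd'.
    - rewrite (Rabs_left (dder f x)), (Rabs_left (dder g x)) in Hd' by lra.
      replace (- dder f x - - dder g x) with (- (dder f x - dder g x)) in Hd' by ring.
      rewrite Rabs_Ropp in Hd'. exact Hd'. }
  unfold dC1, dC0. lra.
Qed.
Lemma dir2 (f : Diff1) eps : eps > 0 -> exists delta, delta > 0 /\
  forall g : Diff1, dC1 f g < delta -> dW f g < eps.
Proof.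
  intros He.
  destruct (deriv_bound _ _ (d_inv_C1 f)) as [N [HN0 HN]].
  assert (Hlow : forall x, inI x -> 1 <= Rabs (dder f x) * N).
  { intros x Hx. pose proof (chain f x Hx) as C.
    assert (Hm : Rabs (dder f x) * Rabs (dinvder f (dfun f x)) = 1)
      by (rewrite <- Rabs_mult, C; apply Rabs_R1).
    assert (Hb := HN (dfun f x) (d_maps f x Hx)).
    pose proof (Rabs_pos (dder f x)). nra. }
  set (eta := eps / (8 * N * N)).
  assert (Heta : eta > 0) by (unfold eta; apply Rdiv_lt_0_compat; nra).
  assert (HNN : 2 * N * N * eta = eps / 4) by (unfold eta; field; lra).
  destruct (unif_cont _ _ (d_C1 f) eta Heta) as [w [Hw HwU]].
  set (delta := Rmin w (Rmin (/ (2 * N)) (Rmin eta (eps / 4)))).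
  assert (D1 : delta <= w) by apply Rmin_l.
  assert (D2 : delta <= / (2 * N)) by (eapply Rle_trans; [apply Rmin_r| apply Rmin_l]).
  assert (D3 : delta <= eta) by (eapply Rle_trans; [apply Rmin_r|];
    eapply Rle_trans; [apply Rmin_r| apply Rmin_l]).
  assert (D4 : delta <= eps / 4) by (eapply Rle_trans; [apply Rmin_r|];
    eapply Rle_trans; [apply Rmin_r| apply Rmin_r]).
  assert (Hinv : 0 < / (2 * N)) by (apply Rinv_0_lt_compat; lra).
  exists delta. split.
  { unfold delta. repeat apply Rmin_glb_lt; lra. }
  intros g Hg.
  destruct (deriv_bound _ _ (d_C1 f)) as [Mf [_ HMf]].
  destruct (deriv_bound _ _ (d_C1 g)) as [Mg [_ HMg]].
  assert (HB1 : forall x, inI x -> Rabs (dfun f x - dfun g x) <= 1).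
  { intros; apply bound1; apply d_maps; auto. }
  assert (HB2 : forall x, inI x -> Rabs (dinv f x - dinv g x) <= 1).
  { intros; apply bound1; apply d_inv_maps; auto. }
  assert (HB3 : forall x, inI x -> Rabs (dder f x - dder g x) <= Mf + Mg).
  { intros x Hx. eapply Rle_trans. apply Rabs_triang. rewrite Rabs_Ropp.
    specialize (HMf x Hx); specialize (HMg x Hx). lra. }
  assert (A1 := unif_ge0 _ _ _ HB1). assert (A2 := unif_ge0 _ _ _ HB2).
  assert (A5 := unif_ge0 _ _ _ HB3).
  unfold dC1, dC0 in Hg.
  set (e := unif (dder f) (dder g)) in *.
  assert (Hee : forall x, inI x -> Rabs (dder f x - dder g x) <= e).
  { intros x Hx. apply (unif_pt _ _ _ x HB3 Hx). }
  assert (W1 : dW' (dfun f) (dfun g) <= e).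
  { apply dW'_le. apply Qw_mvt.
    apply (mvt_bound (fun y => dfun f y - dfun g y) (fun y => dder f y - dder g y)); auto.
    intros x Hx. apply derivI_minus; [apply (proj1 (d_C1 f))|apply (proj1 (d_C1 g))]; auto. }
  set (K := 2 * N * N * (eta + e)).
  assert (W2 : dW' (dinv f) (dinv g) <= K).
  { apply dW'_le. apply Qw_mvt.
    apply (mvt_bound (fun y => dinv f y - dinv g y) (fun y => dinvder f y - dinvder g y)).
    { intros x Hx. apply derivI_minus; [apply (proj1 (d_inv_C1 f))|apply (proj1 (d_inv_C1 g))]; auto. }
    intros y Hy.
    set (p := dinv f y). set (q := dinv g y).
    assert (Hp : inI p) by (apply d_inv_maps; auto).
    assert (Hq : inI q) by (apply d_inv_maps; auto).
    assert (Cf : dder f p * dinvder f y = 1).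
    { pose proof (chain f p Hp) as C. unfold p in C. rewrite d_inv_r in C; auto. }
    assert (Cg : dder g q * dinvder g y = 1).
    { pose proof (chain g q Hq) as C. unfold q in C. rewrite d_inv_r in C; auto. }
    assert (Hpq : Rabs (p - q) < w).
    { pose proof (unif_pt _ _ _ y HB2 Hy). fold p q in H. lra. }
    assert (Hfpq := HwU p q Hp Hq Hpq).
    assert (Hfg := Hee q Hq).
    assert (Hlq := Hlow q Hq).
    set (a := dder f p) in *. set (b := dder g q) in *.
    set (u := dinvder f y) in *. set (v := dinvder g y) in *.
    assert (Hu : Rabs u <= N) by (apply HN; auto).
    assert (Hba : Rabs (b - a) <= e + eta).
    { pose proof (tri3 b a (dder f q) (dder f q)) as T.
      rewrite Rminus_diag, Rabs_R0 in T. rewrite Rabs_minus_sym in Hfg. rewrite Rabs_minus_sym in Hfpq. lra. }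
    assert (Hb : 1 <= Rabs b * (2 * N)).
    { pose proof (Rabs_triang_inv (dder f q) b) as T.
      assert (e * N <= / 2).
      { assert (e <= / (2 * N)) by lra.
        apply Rmult_le_compat_r with (r := N) in H; [|lra].
        replace (/ (2 * N) * N) with (/ 2) in H by (field; lra). exact H. }
      nra. }
    assert (Hv : Rabs v <= 2 * N).
    { assert (Hm : Rabs b * Rabs v = 1) by (rewrite <- Rabs_mult, Cg; apply Rabs_R1).
      pose proof (Rabs_pos v). pose proof (Rabs_pos b). nra. }
    assert (Euv : u - v = u * v * (b - a)).
    { assert (E : u * v * (b - a) = u * (b * v) - v * (a * u)) by ring.
      rewrite E, Cf, Cg. ring. }
    rewrite Euv, !Rabs_mult. unfold K.
    assert (Huv : Rabs u * Rabs v <= N * (2 * N)).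
    { apply Rmult_le_compat; auto; apply Rabs_pos. }
    replace (2 * N * N * (eta + e)) with ((N * (2 * N)) * (e + eta)) by ring.
    apply Rmult_le_compat; auto. apply Rmult_le_pos; apply Rabs_pos. apply Rabs_pos. }
  assert (HK : K < eps / 2).
  { unfold K. assert (0 < N * N) by nra.
    assert (2 * N * N * e < 2 * N * N * eta).
    { apply Rmult_lt_compat_l. lra. lra. }
    nra. }
  unfold dW, dC0. lra.
Qed.

Theorem mainTheorem12 :
  forall f : Diff1,
    (forall eps, eps > 0 -> exists delta, delta > 0 /\
       forall g : Diff1, dW f g < delta -> dC1 f g < eps) /\
    (forall eps, eps > 0 -> exists delta, delta > 0 /\
       forall g : Diff1, dC1 f g < delta -> dW f g < eps).
Proof.
  intros f. split; intros eps He; [apply dir1|apply dir2]; auto.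
Qed.
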